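(* Let $T$ be a rooted binary phylogenetic tree with root $\rho$ of out-degree 2 and children $\rho_1,\rho_2$, and let $\dot T_1,\dot T_2$ be as defined in the context. Under the $N_2$ model, $$RA_{\rm MP}(T)\ \ge\ \tfrac12\big(RA_{\rm MP}(\dot T_1)+RA_{\rm MP}(\dot T_2)\big).$$
   Context: A rooted binary phylogenetic tree is a finite tree with a distinguished root vertex, all edges directed away from it, in which the root has out-degree 2 or 1 (the edge at a root of out-degree 1 is the stem edge), and every other vertex has in-degree 1 and out-degree 0 or 2; out-degree-0 vertices are leaves. Under the Neyman 2-state model $N_2$, each edge $e$ carries a substitution probability $p_e\in[0,\frac12]$; given the root state, states propagate independently along edges, each edge changing state with probability $p_e$; $f$ is the restriction of the states to the leaves. Fitch sets: each leaf $x$ gets $\{f(x)\}$; a vertex with children $v_1,v_2$ gets $\mathrm{FS}(v_1)\cap\mathrm{FS}(v_2)$ if nonempty, else the union; a vertex with one child gets its child's set. $\mathrm{MP}$ chooses a uniformly random element of the root's Fitch set, and $RA_{\rm MP}$ of a tree is the probability that this choice equals the true root state. For $i=1,2$, $T_i$ is the maximal subtree of $T$ rooted at $\rho_i$, and $\dot T_i$ is $T_i$ together with the edge $(\rho,\rho_i)$ (with its substitution probability from $T$) as stem edge, rooted at $\rho$. *)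

(* Defs.v *)
From Stdlib Require Import Reals List Bool.
Import ListNotations.
Open Scope R_scope.

(* A rooted binary (sub)tree below a vertex: either a leaf, or a vertex with
   two children, each child edge carrying its N_2 substitution probability.
   Leaves are ordered left-to-right; a character is a list of leaf states. *)
Inductive tree : Type :=
| Leaf : tree
| Node : R -> tree -> R -> tree -> tree.

Fixpoint nleaves (t : tree) : nat :=
  match t with
  | Leaf => 1%nat
  | Node _ t1 _ t2 => (nleaves t1 + nleaves t2)%nat
  end.

Fixpoint valid (t : tree) : Prop :=
  match t with
  | Leaf => True
  | Node p1 t1 p2 t2 =>
      0 <= p1 <= 1/2 /\ 0 <= p2 <= 1/2 /\ valid t1 /\ valid t2
  end.

Definition trans (p : R) (b c : bool) : R := if Bool.eqb b c then 1 - p else p.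

(* P(leaf states = f | state at the top vertex of t = b) *)
Fixpoint cond_prob (t : tree) (b : bool) (f : list bool) : R :=
  match t with
  | Leaf => match f with
            | [x] => if Bool.eqb x b then 1 else 0
            | _ => 0
            end
  | Node p1 t1 p2 t2 =>
      let f1 := firstn (nleaves t1) f in
      let f2 := skipn (nleaves t1) f in
      (trans p1 b false * cond_prob t1 false f1 + trans p1 b true * cond_prob t1 true f1)
      * (trans p2 b false * cond_prob t2 false f2 + trans p2 b true * cond_prob t2 true f2)
  end.

(* Fitch set as a pair (false ∈ FS, true ∈ FS) *)
Fixpoint fitch (t : tree) (f : list bool) : bool * bool :=
  match t with
  | Leaf => match f with
            | [x] => (negb x, x)
            | _ => (false, false)
            end
  | Node _ t1 _ t2 =>
      let '(a1, b1) := fitch t1 (firstn (nleaves t1) f) in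
      let '(a2, b2) := fitch t2 (skipn (nleaves t1) f) in
      if (a1 && a2) || (b1 && b2) then (a1 && a2, b1 && b2)
      else (a1 || a2, b1 || b2)
  end.

Definition mem_fs (s : bool * bool) (b : bool) : bool := if b then snd s else fst s.
Definition card_fs (s : bool * bool) : R :=
  (if fst s then 1 else 0) + (if snd s then 1 else 0).

(* probability that a uniform random element of the Fitch set s equals b *)
Definition mp_score (s : bool * bool) (b : bool) : R :=
  if mem_fs s b then / card_fs s else 0.

Fixpoint chars (n : nat) : list (list bool) :=
  match n with
  | O => [[]]
  | S m => map (cons false) (chars m) ++ map (cons true) (chars m)
  end.

Definition sumR {A} (l : list A) (g : A -> R) : R :=
  fold_right (fun x acc => g x + acc) 0 l.

(* RA_MP of the tree whose root (out-degree 2) is the top vertex of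
   Node p1 t1 p2 t2; root state uniform on {0,1}. *)
Definition RA_node (p1 : R) (t1 : tree) (p2 : R) (t2 : tree) : R :=
  let T := Node p1 t1 p2 t2 in
  sumR [false; true] (fun b =>
    / 2 * sumR (chars (nleaves T)) (fun f => cond_prob T b f * mp_score (fitch T f) b)).

(* RA_MP of the tree with root of out-degree 1: stem edge with substitution
   probability p leading to the top vertex of t; root state uniform. *)
Definition RA_stem (p : R) (t : tree) : R :=
  sumR [false; true] (fun b =>
    / 2 * sumR (chars (nleaves t)) (fun f =>
      (trans p b false * cond_prob t false f + trans p b true * cond_prob t true f)
      * mp_score (fitch t f) b)).

(* Main.v *)
Require Import Defs.
From Stdlib Require Import Reals.
From Stdlib Require Import Lra Psatz List Bool.
Import ListNotations.
Open Scope R_scope.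

Lemma sumR_ext_in {A} (l : list A) g h :
  (forall x, In x l -> g x = h x) -> sumR l g = sumR l h.
Proof.
  induction l as [|a l IH]; intros H; simpl; [reflexivity|].
  rewrite H by (left; reflexivity). rewrite IH; [reflexivity|].
  intros x Hx; apply H; right; exact Hx.
Qed.

Lemma sumR_app {A} (l1 l2 : list A) g : sumR (l1 ++ l2) g = sumR l1 g + sumR l2 g.
Proof. induction l1; simpl; [ring|]. rewrite IHl1; ring. Qed.

Lemma sumR_map {A B} (k : A -> B) l g : sumR (map k l) g = sumR l (fun x => g (k x)).
Proof. induction l; simpl; [reflexivity|]. rewrite IHl; reflexivity. Qed.

Lemma sumR_plus {A} (l : list A) f g :
  sumR l (fun x => f x + g x) = sumR l f + sumR l g.
Proof. induction l; simpl; [ring|]. rewrite IHl; ring. Qed.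

Lemma sumR_scal {A} (l : list A) a f :
  sumR l (fun x => a * f x) = a * sumR l f.
Proof. induction l; simpl; [ring|]. rewrite IHl; ring. Qed.

Lemma chars_len n f : In f (chars n) -> length f = n.
Proof.
  revert f; induction n as [|n IH]; intros f Hf; simpl in Hf.
  - destruct Hf as [<-|[]]; reflexivity.
  - apply in_app_iff in Hf. destruct Hf as [Hf|Hf]; apply in_map_iff in Hf;
    destruct Hf as [x [<- Hx]]; simpl; rewrite (IH x Hx); reflexivity.
Qed.

Lemma chars_split n1 n2 g :
  sumR (chars (n1 + n2)) g =
  sumR (chars n1) (fun f1 => sumR (chars n2) (fun f2 => g (f1 ++ f2))).
Proof.
  revert g; induction n1 as [|m IH]; intros g.
  - simpl. rewrite Rplus_0_r. reflexivity.
  - simpl. rewrite !sumR_app, !sumR_map, !IH. reflexivity.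
Qed.

Lemma firstn_len {A} (l1 l2 : list A) : firstn (length l1) (l1 ++ l2) = l1.
Proof. induction l1; simpl; [reflexivity|]. rewrite IHl1; reflexivity. Qed.

Lemma skipn_len {A} (l1 l2 : list A) : skipn (length l1) (l1 ++ l2) = l2.
Proof. induction l1; simpl; [reflexivity|]. exact IHl1. Qed.

Definition ind (s x : bool * bool) : R :=
  if Bool.eqb (fst x) (fst s) && Bool.eqb (snd x) (snd s) then 1 else 0.

Definition fs4 (W : bool * bool -> R) (h : bool * bool -> R) : R :=
  W (false,false) * h (false,false) + W (false,true) * h (false,true)
  + W (true,false) * h (true,false) + W (true,true) * h (true,true).

Lemma GL {A} (l : list A) (w : A -> R) (F : A -> bool * bool) h :
  sumR l (fun f => w f * h (F f)) =
  fs4 (fun s => sumR l (fun f => w f * ind s (F f))) h.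
Proof.
  induction l as [|a l IH]; simpl.
  - unfold fs4; ring.
  - rewrite IH. unfold fs4, ind; simpl.
    destruct (F a) as [[|] [|]]; simpl; ring.
Qed.

Definition comb (s1 s2 : bool * bool) : bool * bool :=
  let '(a1, b1) := s1 in let '(a2, b2) := s2 in
  if (a1 && a2) || (b1 && b2) then (a1 && a2, b1 && b2)
  else (a1 || a2, b1 || b2).

Lemma DL {A B} (l1 : list A) (l2 : list B) w1 w2 F1 F2 h :
  sumR l1 (fun f1 => sumR l2 (fun f2 => w1 f1 * w2 f2 * h (comb (F1 f1) (F2 f2)))) =
  fs4 (fun s => sumR l1 (fun f => w1 f * ind s (F1 f)))
      (fun s1 => fs4 (fun s => sumR l2 (fun f => w2 f * ind s (F2 f)))
                     (fun s2 => h (comb s1 s2))).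
Proof.
  rewrite <- GL. apply sumR_ext_in; intros f1 _.
  rewrite <- (GL l2 w2 F2 (fun s2 => h (comb (F1 f1) s2))).
  rewrite <- sumR_scal. apply sumR_ext_in; intros; ring.
Qed.

Definition M t p c f :=
  trans p c false * cond_prob t false f + trans p c true * cond_prob t true f.
Definition Sfn t c h :=
  sumR (chars (nleaves t)) (fun f => cond_prob t c f * h (fitch t f)).
Definition Stem t p c h :=
  sumR (chars (nleaves t)) (fun f => M t p c f * h (fitch t f)).
Definition Q t c s := Sfn t c (ind s).
Definition W t p c s := Stem t p c (ind s).

Lemma Stem_lin t p c h :
  Stem t p c h = trans p c false * Sfn t false h + trans p c true * Sfn t true h.
Proof.
  unfold Stem, Sfn. rewrite <- !sumR_scal, <- sumR_plus.
  apply sumR_ext_in; intros; unfold M; ring.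
Qed.

Lemma Stem_dec t p c h : Stem t p c h = fs4 (W t p c) h.
Proof. unfold Stem. rewrite GL. reflexivity. Qed.

Lemma Node_dec p1 t1 p2 t2 c h :
  Sfn (Node p1 t1 p2 t2) c h =
  fs4 (W t1 p1 c) (fun s1 => fs4 (W t2 p2 c) (fun s2 => h (comb s1 s2))).
Proof.
  unfold Sfn. cbn [nleaves]. rewrite chars_split.
  unfold W, Stem.
  rewrite <- (DL (chars (nleaves t1)) (chars (nleaves t2)) (M t1 p1 c) (M t2 p2 c)
               (fitch t1) (fitch t2) h).
  apply sumR_ext_in; intros f1 H1.
  apply sumR_ext_in; intros f2 H2.
  cbn [cond_prob fitch].
  rewrite <- (chars_len _ _ H1), firstn_len, skipn_len.
  unfold M, comb.
  destruct (fitch t1 f1) as [a1 b1]; destruct (fitch t2 f2) as [a2 b2].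
  reflexivity.
Qed.

Definition InvP t := exists A B G,
  (forall c, Q t c (negb c, c) = A /\ Q t c (c, negb c) = B /\
             Q t c (true,true) = G /\ Q t c (false,false) = 0) /\
  A + B + G = 1 /\ 0 <= B <= A /\ 0 <= G.

Definition SVP t p := exists a b g,
  (forall c, W t p c (negb c, c) = a /\ W t p c (c, negb c) = b /\
             W t p c (true,true) = g /\ W t p c (false,false) = 0) /\
  a + b + g = 1 /\ 0 <= b <= a /\ 0 <= g.

Lemma Inv_SV t p : InvP t -> 0 <= p <= 1/2 -> SVP t p.
Proof.
  intros [A [B [G [HQ [Hs [HB HG]]]]]] Hp.
  exists ((1-p)*A + p*B), ((1-p)*B + p*A), G.
  split; [|split; [lra|split; [split; nra|lra]]].
  intros c. unfold W. rewrite !Stem_lin.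
  pose proof (HQ false) as E0; pose proof (HQ true) as E1; cbn [negb] in E0, E1.
  unfold Q in E0, E1.
  destruct E0 as [E0a [E0b [E0c E0d]]]; destruct E1 as [E1a [E1b [E1c E1d]]].
  destruct c; cbn [negb]; rewrite ?E0a, ?E0b, ?E0c, ?E0d, ?E1a, ?E1b, ?E1c, ?E1d;
  unfold trans; simpl; repeat split; ring.
Qed.

Lemma Inv t : valid t -> InvP t.
Proof.
  induction t as [|q1 t1 IH1 q2 t2 IH2]; intros Hv.
  - exists 1, 0, 0. split; [|lra].
    intros c; unfold Q, Sfn, ind; destruct c; simpl; repeat split; ring.
  - destruct Hv as [Hq1 [Hq2 [Hv1 Hv2]]].
    destruct (Inv_SV t1 q1 (IH1 Hv1) Hq1) as [a1 [b1 [g1 [H1 [S1 [B1 G1]]]]]].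
    destruct (Inv_SV t2 q2 (IH2 Hv2) Hq2) as [a2 [b2 [g2 [H2 [S2 [B2 G2]]]]]].
    exists (a1*a2 + a1*g2 + g1*a2), (b1*b2 + b1*g2 + g1*b2), (a1*b2 + b1*a2 + g1*g2).
    split.
    + intros c. unfold Q. rewrite !Node_dec.
      pose proof (H1 false) as E0; pose proof (H1 true) as E1; cbn [negb] in E0, E1.
      pose proof (H2 false) as F0; pose proof (H2 true) as F1; cbn [negb] in F0, F1.
      destruct E0 as [E0a [E0b [E0c E0d]]]; destruct E1 as [E1a [E1b [E1c E1d]]].
      destruct F0 as [F0a [F0b [F0c F0d]]]; destruct F1 as [F1a [F1b [F1c F1d]]].
      destruct c; cbn [negb]; unfold fs4;
      rewrite ?E0a, ?E0b, ?E0c, ?E0d, ?E1a, ?E1b, ?E1c, ?E1d;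
      rewrite ?F0a, ?F0b, ?F0c, ?F0d, ?F1a, ?F1b, ?F1c, ?F1d;
      unfold ind; simpl; repeat split; ring.
    + split; [|split; [split|]].
      * replace 1 with ((a1+b1+g1)*(a2+b2+g2)) by (rewrite S1, S2; ring). ring.
      * nra.
      * assert (a1*a2 >= b1*b2) by nra. nra.
      * nra.
Qed.

Lemma mp_ineq a1 b1 g1 a2 b2 g2 :
  a1 + b1 + g1 = 1 -> 0 <= b1 <= a1 -> 0 <= g1 ->
  a2 + b2 + g2 = 1 -> 0 <= b2 <= a2 -> 0 <= g2 ->
  a1*a2 + /2*(a1*b2 + b1*a2) + a1*g2 + g1*a2 + /2*(g1*g2)
  >= /2 * ((a1 + /2*g1) + (a2 + /2*g2)).
Proof. intros; nra. Qed.

Lemma per_b p1 t1 p2 t2 b : SVP t1 p1 -> SVP t2 p2 ->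
  Sfn (Node p1 t1 p2 t2) b (fun s => mp_score s b) >=
  /2 * (Stem t1 p1 b (fun s => mp_score s b) + Stem t2 p2 b (fun s => mp_score s b)).
Proof.
  intros [a1 [b1 [g1 [H1 [S1 [B1 G1]]]]]] [a2 [b2 [g2 [H2 [S2 [B2 G2]]]]]].
  rewrite Node_dec, !Stem_dec.
  pose proof (H1 false) as E0; pose proof (H1 true) as E1; cbn [negb] in E0, E1.
  pose proof (H2 false) as F0; pose proof (H2 true) as F1; cbn [negb] in F0, F1.
  destruct E0 as [E0a [E0b [E0c E0d]]]; destruct E1 as [E1a [E1b [E1c E1d]]].
  destruct F0 as [F0a [F0b [F0c F0d]]]; destruct F1 as [F1a [F1b [F1c F1d]]].
  pose proof (mp_ineq a1 b1 g1 a2 b2 g2 S1 B1 G1 S2 B2 G2) as K.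
  destruct b; unfold fs4;
  rewrite ?E0a, ?E0b, ?E0c, ?E0d, ?E1a, ?E1b, ?E1c, ?E1d;
  rewrite ?F0a, ?F0b, ?F0c, ?F0d, ?F1a, ?F1b, ?F1c, ?F1d;
  unfold mp_score, card_fs, mem_fs; simpl;
  replace (/ (1 + 0)) with 1 by (field);
  replace (/ (0 + 1)) with 1 by (field);
  replace (/ (1 + 1)) with (/2) by (field);
  lra.
Qed.

Theorem mainTheorem14 (p1 : R) (t1 : tree) (p2 : R) (t2 : tree) :
  valid (Node p1 t1 p2 t2) ->
  RA_node p1 t1 p2 t2 >= / 2 * (RA_stem p1 t1 + RA_stem p2 t2).
Proof.
  intros Hv. pose proof Hv as [Hq1 [Hq2 [Hv1 Hv2]]].
  pose proof (Inv_SV t1 p1 (Inv t1 Hv1) Hq1) as S1.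
  pose proof (Inv_SV t2 p2 (Inv t2 Hv2) Hq2) as S2.
  change (RA_node p1 t1 p2 t2) with
    (/2 * Sfn (Node p1 t1 p2 t2) false (fun s => mp_score s false)
     + (/2 * Sfn (Node p1 t1 p2 t2) true (fun s => mp_score s true) + 0)).
  change (RA_stem p1 t1) with
    (/2 * Stem t1 p1 false (fun s => mp_score s false)
     + (/2 * Stem t1 p1 true (fun s => mp_score s true) + 0)).
  change (RA_stem p2 t2) with
    (/2 * Stem t2 p2 false (fun s => mp_score s false)
     + (/2 * Stem t2 p2 true (fun s => mp_score s true) + 0)).
  pose proof (per_b p1 t1 p2 t2 false S1 S2).
  pose proof (per_b p1 t1 p2 t2 true S1 S2).
  lra.
Qed.
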